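(* Let $m \in \mathbb{N}$ with $m\ge 2$ and $r_m = \sqrt{\frac{2(m+1)}{m}}$, and let $\Phi$ be the map defined in the context. Then for all $[x],[y]\in\mathbb{RP}^m(r_m)$ (with representatives $x,y \in \mathbb{S}^m(r_m)$), $$\|\Phi([x]) - \Phi([y])\|^2 = -\frac{m}{2(m+1)}\langle x,y\rangle^2 + \frac{2(m+1)}{m}.$$ Consequently, for any random variable $X$ with values in $\mathbb{RP}^m(r_m)$, $$\operatorname{argmax}_{[y]\in\mathbb{RP}^m(r_m)} \mathbb{E}[\langle X,y\rangle^2] = \operatorname{argmin}_{[y]\in\mathbb{RP}^m(r_m)} \mathbb{E}\big[\|\Phi([X]) - \Phi([y])\|^2\big].$$
   Context: For $r>0$, $\mathbb{S}^m(r)\subset\mathbb{R}^{m+1}$ is the sphere of radius $r$ centered at $0$, and $\mathbb{RP}^m(r) = \{[x] : x \in \mathbb{S}^m(r)\}$ with $[x]=\{x,-x\}$; $\langle x,y\rangle^2$ does not depend on the choice of representatives. Define $F_m:\mathbb{R}^{m+1}\times\mathbb{R}^{m+1}\to\mathbb{R}^{\frac{m(m+3)}{2}}$ recursively by $F_1((x_1,x_2),(y_1,y_2)) = (x_1y_1 - x_2y_2,\ x_1y_2 + x_2y_1)$ and, for $x,y\in\mathbb{R}^{m+1}$, $x_{m+2},y_{m+2}\in\mathbb{R}$, $F_{m+1}((x,x_{m+2}),(y,y_{m+2})) = \big(F_m(x,y),\ x_{m+2}y + y_{m+2}x,\ \tau_{m+1}(\langle x,y\rangle - (m+1)x_{m+2}y_{m+2})\big)$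 with $\tau_{m+1} = \sqrt{\frac{2}{(m+1)(m+2)}}$. Then $\Phi([x]) := \frac12\sqrt{\frac{m}{2(m+1)}}\,F_m(x,x)$ for $x \in \mathbb{S}^m(r_m)$ (this is an isometric embedding of $\mathbb{RP}^m(r_m)$, with the metric induced from the round sphere, into the unit sphere $\mathbb{S}^{\frac{m(m+3)}{2}-1}$). *)

(* Defs.v *)
From HB Require Import structures.
From mathcomp Require Import all_boot all_order all_algebra.
From mathcomp Require Import all_classical all_reals all_analysis.
Set Implicit Arguments. Unset Strict Implicit. Unset Printing Implicit Defensive.
Import Order.TTheory GRing.Theory Num.Theory.
Local Open Scope ring_scope.

Section Defs.
Variable R : realType.

Definition dotv n (x y : 'rV[R]_n) : R := \sum_(i < n) x 0 i * y 0 i.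

Definition sqnorm n (v : 'rV[R]_n) : R := dotv v v.

Definition on_sphere n (r : R) (x : 'rV[R]_n) : Prop := sqnorm x = r ^+ 2.

Definition r_ (m : nat) : R := Num.sqrt (2 * m.+1%:R / m%:R).

Definition tau (k : nat) : R := Num.sqrt (2 / (k%:R * k.+1%:R)).

Definition vseq n (x : 'rV[R]_n) : seq R := [seq x 0 i | i <- enum 'I_n].

(* F_m on sequences: x, y of length m+1 (x = (x', x_{m+1}) with x' = take m x). *)
Fixpoint Fseq (m : nat) (x y : seq R) : seq R :=
  match m with
  | 0 => [::]
  | m'.+1 =>
    match m' with
    | 0 => [:: nth 0 x 0 * nth 0 y 0 - nth 0 x 1 * nth 0 y 1;
               nth 0 x 0 * nth 0 y 1 + nth 0 x 1 * nth 0 y 0]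
    | _ =>
      let x' := take m'.+1 x in let y' := take m'.+1 y in
      let a := nth 0 x m'.+1 in let b := nth 0 y m'.+1 in
      Fseq m' x' y' ++
      [seq a * yi + b * xi | '(xi, yi) <- zip x' y'] ++
      [:: tau m'.+1 * (\sum_(i < m'.+1) nth 0 x' i * nth 0 y' i
                        - m'.+1%:R * a * b)]
    end
  end.

Definition F (m : nat) (x y : 'rV[R]_m.+1) : 'rV[R]_((m * (m + 3)) %/ 2) :=
  \row_i nth 0 (Fseq m (vseq x) (vseq y)) i.

(* Phi([x]) = 1/2 sqrt(m/(2(m+1))) F_m(x,x), for a representative x *)
Definition Phi (m : nat) (x : 'rV[R]_m.+1) : 'rV[R]_((m * (m + 3)) %/ 2) :=
  (2^-1 * Num.sqrt (m%:R / (2 * m.+1%:R))) *: F x x.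

End Defs.

(* Main.v *)
Require Import Defs.
From HB Require Import structures.
From mathcomp Require Import all_boot all_order all_algebra.
From mathcomp Require Import all_classical all_reals all_analysis.
From mathcomp Require Import ring lra zify measurable_realfun.
Import Order.TTheory GRing.Theory Num.Theory.
Local Open Scope ring_scope.
Local Open Scope classical_set_scope.

Section Aux.
Variable R : realType.
Definition ld (s t : seq R) : R := \sum_(p <- zip s t) p.1 * p.2.
Definition sd k (s t : seq R) : R := \sum_(i < k) nth 0 s i * nth 0 t i.

Lemma ld_cat a b c d : size a = size c -> ld (a ++ b) (c ++ d) = ld a c + ld b d.
Proof. by move=> h; rewrite /ld zip_cat // big_cat. Qed.

Lemma ld_sd s t : size s = size t -> ld s t = sd (size s) s t.
Proof.
elim: s t => [|x s IH] [|y t] //=; first by rewrite /ld /sd big_ord0 big_nil.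
move=> [] h; rewrite /ld /sd /= big_cons big_ord_recl /=; congr (_ + _).
by rewrite -/(ld s t) IH.
Qed.

Lemma ld1 u v : ld [:: u] [:: v] = u * v.
Proof. by rewrite /ld /= big_cons big_nil addr0. Qed.

Lemma ld_mid s t a b : size s = size t ->
  ld [seq a * yi + a * xi | '(xi, yi) <- zip s s]
     [seq b * yi + b * xi | '(xi, yi) <- zip t t] = 4 * a * b * ld s t.
Proof.
elim: s t => [|x s IH] [|y t] //=; first by rewrite /ld /= !big_nil mulr0.
move=> [] h; rewrite /ld /= !big_cons -!/(ld _ _) IH // /=. ring.
Qed.

Lemma sd_take k s t : sd k.+1 s t = sd k (take k s) (take k t) + nth 0 s k * nth 0 t k.
Proof.
rewrite /sd big_ord_recr /=; congr (_ + _); apply: eq_bigr => i _.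
by rewrite !nth_take.
Qed.

Lemma FseqS m (x y : seq R) : Fseq m.+2 x y =
  Fseq m.+1 (take m.+2 x) (take m.+2 y) ++
  [seq nth 0 x m.+2 * yi + nth 0 y m.+2 * xi | '(xi, yi) <- zip (take m.+2 x) (take m.+2 y)] ++
  [:: tau R m.+2 * (sd m.+2 (take m.+2 x) (take m.+2 y) - m.+2%:R * nth 0 x m.+2 * nth 0 y m.+2)].
Proof. by []. Qed.

Lemma size_Fseq m (x y : seq R) : (1 <= m)%N -> size x = m.+1 -> size y = m.+1 ->
  size (Fseq m x y) = ((m * (m + 3)) %/ 2)%N.
Proof.
elim: m x y => [//|m IH] x y _ hx hy.
case: m IH hx hy => [|m] IH hx hy; first by [].
have hx' : size (take m.+2 x) = m.+2 by rewrite size_takel // hx.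
have hy' : size (take m.+2 y) = m.+2 by rewrite size_takel // hy.
rewrite FseqS !size_cat IH // size_map size_zip hx' hy' minnn /=.
lia.
Qed.

Lemma tau2 k : tau R k ^+ 2 = 2 / (k%:R * k.+1%:R).
Proof. by rewrite /tau sqr_sqrtr // divr_ge0 // mulr_ge0. Qed.


Lemma Fseq_dot m (x y : seq R) : (1 <= m)%N -> size x = m.+1 -> size y = m.+1 ->
  ld (Fseq m x x) (Fseq m y y) =
  2 * sd m.+1 x y ^+ 2 - 2 / m.+1%:R * sd m.+1 x x * sd m.+1 y y.
Proof.
elim: m x y => [//|m IH] x y _ hx hy.
case: m IH hx hy => [|m] IH hx hy.
  case: x hx => [|x0 [|x1 [|]]] // _; case: y hy => [|y0 [|y1 [|]]] // _.
  rewrite /ld /sd /= !big_cons big_nil !big_ord_recr !big_ord0 /=.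
  by field.
have hx' : size (take m.+2 x) = m.+2 by rewrite size_takel // hx.
have hy' : size (take m.+2 y) = m.+2 by rewrite size_takel // hy.
rewrite !FseqS ld_cat; last by rewrite (@size_Fseq m.+1 (take m.+2 x) (take m.+2 x)) // (@size_Fseq m.+1 (take m.+2 y) (take m.+2 y)).
rewrite ld_cat; last by rewrite !size_map !size_zip hx' hy'.
rewrite IH // ld_mid; last by rewrite hx' hy'.
rewrite ld1 (ld_sd _ _ (etrans hx' (esym hy'))) hx' (sd_take m.+2 x y) (sd_take m.+2 x x) (sd_take m.+2 y y).
rewrite mulrACA -expr2 tau2.
set X := sd _ (take _ x) (take _ x).
set Y := sd _ (take _ y) (take _ y).
set Z := sd _ (take _ x) (take _ y).
set a := nth 0 x _. set b := nth 0 y _.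
rewrite -[m.+3]addn3 -[m.+2]addn2 !natrD.
field; rewrite -!natrD !pnatr_eq0 addn3 addn2 //=.
Qed.

Lemma nth_vseq n (x : 'rV[R]_n) (i : 'I_n) : nth 0 (vseq x) i = x 0 i.
Proof. by rewrite /vseq (nth_map i) ?size_enum_ord // nth_ord_enum. Qed.

Lemma size_vseq n (x : 'rV[R]_n) : size (vseq x) = n.
Proof. by rewrite /vseq size_map size_enum_ord. Qed.

Lemma dotv_sd n (x y : 'rV[R]_n) : dotv x y = sd n (vseq x) (vseq y).
Proof. by apply: eq_bigr => i _; rewrite !nth_vseq. Qed.

Lemma part1 m (hm : (1 <= m)%N) (x y : 'rV[R]_m.+1) :
  on_sphere (r_ R m) x -> on_sphere (r_ R m) y ->
  sqnorm (Phi x - Phi y)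
   = - (m%:R / (2 * m.+1%:R)) * (dotv x y) ^+ 2 + 2 * m.+1%:R / m%:R.
Proof.
rewrite /on_sphere /sqnorm => hx hy.
set N := ((m * (m + 3)) %/ 2)%N.
set u := Fseq m (vseq x) (vseq x).
set v := Fseq m (vseq y) (vseq y).
set c := 2^-1 * Num.sqrt (m%:R / (2 * m.+1%:R)) : R.
have -> : dotv (Phi x - Phi y) (Phi x - Phi y) =
   c ^+ 2 * sd N u u - 2 * c ^+ 2 * sd N u v + c ^+ 2 * sd N v v.
  rewrite /dotv /sd !mulr_sumr -sumrB -big_split /=; apply: eq_bigr => i _.
  rewrite !mxE /c /u /v; ring.
have su : size u = N by rewrite size_Fseq // size_vseq.
have sv : size v = N by rewrite size_Fseq // size_vseq.
rewrite -{1}su -ld_sd // -{1}su -ld_sd ?sv // -{1}sv -ld_sd //.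
rewrite !Fseq_dot ?size_vseq // -!dotv_sd hx hy.
have hm0 : (0 < m%:R :> R) by rewrite ltr0n.
have -> : c ^+ 2 = m%:R / (2 * m.+1%:R) / 4.
  rewrite /c exprMn sqr_sqrtr; last by rewrite divr_ge0 // mulr_ge0.
  by rewrite exprVn; field; rewrite addrC natr1 pnatr_eq0.
rewrite /r_ sqr_sqrtr; last by rewrite divr_ge0 // mulr_ge0.
rewrite -[m.+1%:R]natr1.
by field; rewrite natr1 !pnatr_eq0 -lt0n hm.
Qed.
End Aux.

Lemma Lfun_bnd d (T : measurableType d) (R : realType) (P : probability T R)
  (f : T -> R) (B : R) : measurable_fun setT f -> (forall w, `|f w| <= B) ->
  f \in Lfun P 1.
Proof.
move=> mf fB; apply/Lfun1_integrable; apply: measurable_bounded_integrable => //.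
  first [ by apply: (le_lt_trans (probability_le1 P measurableT)); rewrite ltry | idtac "A"; by move: (probability_setT P) => /= ->; rewrite ltry ].
rewrite /bounded_near; exists B; split; first exact: num_real.
by move=> M hM x _ /=; exact: le_trans (fB x) (ltW hM).
Qed.

Lemma meas_dot d (T : measurableType d) (R : realType) n (X : 'I_n -> T -> R)
  (z : 'rV[R]_n) : (forall i, measurable_fun setT (X i)) ->
  measurable_fun setT (fun w => (\sum_(i < n) (\row_i X i w) 0 i * z 0 i) ^+ 2).
Proof.
move=> mX; apply: measurable_funX.
have -> : (fun w => \sum_(i < n) (\row_i X i w) 0 i * z 0 i) =
   (fun w => \sum_(i < n) (X i w * z 0 i)).
  by apply/funext => w; apply: eq_bigr => i _; rewrite mxE.
apply: measurable_sum => i; apply: measurable_funM => //.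
Qed.

Theorem theorem3p14 (R : realType) (m : nat) (hm : (2 <= m)%N) :
  (forall x y : 'rV[R]_m.+1,
     on_sphere (r_ R m) x -> on_sphere (r_ R m) y ->
     sqnorm (Phi x - Phi y)
       = - (m%:R / (2 * m.+1%:R)) * (dotv x y) ^+ 2 + 2 * m.+1%:R / m%:R)
  /\
  (forall (d : measure_display) (T : measurableType d) (P : probability T R)
          (X : 'I_m.+1 -> T -> R),
     (forall i, measurable_fun setT (X i)) ->
     (forall w, on_sphere (r_ R m) (\row_i X i w)) ->
     [set y : 'rV[R]_m.+1 | on_sphere (r_ R m) y /\
        forall z, on_sphere (r_ R m) z ->
          ('E_P[fun w => ((dotv (\row_i X i w) z) ^+ 2)%R]
             <= 'E_P[fun w => ((dotv (\row_i X i w) y) ^+ 2)%R])%E]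
     =
     [set y : 'rV[R]_m.+1 | on_sphere (r_ R m) y /\
        forall z, on_sphere (r_ R m) z ->
          ('E_P[fun w => (sqnorm (Phi (\row_i X i w) - Phi y))%R]
             <= 'E_P[fun w => (sqnorm (Phi (\row_i X i w) - Phi z))%R])%E]).
Proof.
have hm1 : (1 <= m)%N by exact: ltnW.
split; first by move=> x y; exact: (@part1 R m hm1).
move=> d T P X mX hX.
set k : R := m%:R / (2 * m.+1%:R).
set C : R := 2 * m.+1%:R / m%:R.
have hk : 0 < k by rewrite /k divr_gt0 ?mulr_gt0 // ltr0n.
have mg z : measurable_fun setT (fun w => dotv (\row_i X i w) z ^+ 2).
  exact: meas_dot.
have gbd z : on_sphere (r_ R m) z -> forall w, `|dotv (\row_i X i w) z ^+ 2| <= C / k.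
  move=> hz w; rewrite ger0_norm ?sqr_ge0 //.
  have h1 := @part1 R m hm1 _ _ (hX w) hz.
  have h0 : 0 <= sqnorm (Phi (\row_i X i w) - Phi z).
    by rewrite /sqnorm /dotv; apply: sumr_ge0 => i _; rewrite -expr2 sqr_ge0.
  rewrite ler_pdivlMr //. rewrite -/k -/C in h1. lra.
have gL z : on_sphere (r_ R m) z -> (fun w => dotv (\row_i X i w) z ^+ 2) \in Lfun P 1.
  by move=> hz; exact: Lfun_bnd (mg z) (gbd z hz).
have kgL z : on_sphere (r_ R m) z -> (k \o* (fun w => dotv (\row_i X i w) z ^+ 2)) \in Lfun P 1.
  move=> hz; apply: (@Lfun_bnd _ _ _ _ _ (k * (C / k))).
    by apply: measurable_funM => //; exact: mg.
  by move=> w /=; rewrite normrM (gtr0_norm hk) mulrC ler_pM2l // gbd.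
have E1 z : on_sphere (r_ R m) z ->
  'E_P[fun w => (sqnorm (Phi (\row_i X i w) - Phi z))%R]%E =
  ((C - k * fine 'E_P[fun w => (dotv (\row_i X i w) z ^+ 2)%R]%E)%:E)%E.
  move=> hz.
  have -> : (fun w => sqnorm (Phi (\row_i X i w) - Phi z)) =
     (cst C \- (k \o* (fun w => dotv (\row_i X i w) z ^+ 2))).
    by apply/funext => w; rewrite /= (@part1 R m hm1 _ _ (hX w) hz) -/k -/C; ring.
  rewrite expectationB ?Lfun_cst ?kgL // expectation_cst expectationZl ?gL //.
  by rewrite -[in LHS](fineK (expectation_fin_num (gL z hz))) EFinB EFinM.
have Eg z : on_sphere (r_ R m) z ->
  'E_P[fun w => (dotv (\row_i X i w) z ^+ 2)%R]%E =
  ((fine 'E_P[fun w => (dotv (\row_i X i w) z ^+ 2)%R]%E)%:E)%E.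
  by move=> hz; rewrite fineK ?expectation_fin_num ?gL.
apply/seteqP; split => y /= [hy H]; split => // z hz; have := H z hz.
  rewrite (Eg z hz) (Eg y hy) (E1 z hz) (E1 y hy) !lee_fin => h.
  by rewrite lerD2l lerN2 ler_pM2l.
rewrite (Eg z hz) (Eg y hy) (E1 z hz) (E1 y hy) !lee_fin.
by rewrite lerD2l lerN2 ler_pM2l.
Qed.
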